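(* Let $n$ and $i$ be positive integers with $i<n/3$. Then there exists a partition $\mathfrak p$ of $n$ such that: (1) if $n\neq 4i+2$ and $(n,i)\neq(8,1)$, then for every integer $1\le m\le n$, $m$ is a partial sum of $\mathfrak p$ if and only if $m\notin\{i,\,n-i\}$; (2) if $n=4i+2$ or $(n,i)=(8,1)$, then for every integer $1\le m\le n$, $m$ is a partial sum of $\mathfrak p$ if and only if $m\notin\{i,\,n-i,\,n/2\}$.
   Context: A partition of $n$ is a finite multiset $(a_1,\dots,a_t)$ of positive integers with sum $n$. An integer $m$ is a partial sum of the partition $(a_1,\dots,a_t)$ if $m=a_{j_1}+\cdots+a_{j_\ell}$ for some $\ell\ge1$ and indices $1\le j_1<\dots<j_\ell\le t$. *)

(* Defs.v *)
From mathcomp Require Import all_boot.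
Set Implicit Arguments. Unset Strict Implicit. Unset Printing Implicit Defensive.

(* A partition of n: a finite list (order irrelevant) of positive integers with sum n. *)
Definition is_partition (n : nat) (p : seq nat) : Prop :=
  all (fun a => 0 < a) p /\ sumn p = n.

(* m is a partial sum of p: sum of a nonempty sub-multiset of the parts
   (chosen by distinct indices), i.e. a nonempty subsequence. *)
Definition partial_sum (p : seq nat) (m : nat) : Prop :=
  exists s : seq nat, [/\ subseq s p, s != [::] & sumn s = m].

(* Main.v *)
Require Import Defs.
From mathcomp Require Import all_boot.
From mathcomp Require Import zify.

Definition ps0 (p : seq nat) (m : nat) := exists s, subseq s p /\ sumn s = m.

Lemma ps0_nil m : ps0 [::] m <-> m = 0.
Proof.
split.
- by move=> [s []]; rewrite subseq0 => /eqP -> <-.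
- by move=> ->; exists [::].
Qed.

Lemma ps0_cons d p m : ps0 (d :: p) m <-> ps0 p m \/ (d <= m /\ ps0 p (m - d)).
Proof.
split.
- move=> [[|x s] [Hs Hm]].
    by left; exists [::]; split => //; apply: sub0seq.
  move: Hs => /=; case: eqP => [Exd Hs|_ Hs]; first subst x.
    right; split; first by move: Hm => /= <-; apply: leq_addr.
    by exists s; split => //; move: Hm => /= <-; rewrite addKn.
  by left; exists (x :: s).
- case=> [[s [Hs Hm]]|[Hd [s [Hs Hm]]]].
    exists s; split => //; apply: (subseq_trans Hs); apply: subseq_cons.
  exists (d :: s); split; first by rewrite /= eqxx.
  by rewrite /= Hm subnKC.
Qed.

Lemma ps0_ones k m : ps0 (nseq k 1) m <-> m <= k.
Proof.
elim: k m => [|k IH] m.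
  rewrite ps0_nil; lia.
rewrite [nseq _ _]/= ps0_cons !IH; lia.
Qed.

Definition good i T p := all (fun a => 0 < a) p /\ sumn p = T /\
  forall m, ps0 p m <-> (m <= T /\ m <> i /\ m <> T - i).

Lemma good_step i T p d : 0 < i -> good i T p -> i + 1 <= d -> d + i <= T ->
  d + 2 * i <> T -> good i (T + d) (d :: p).
Proof.
move=> hi [Hp [Hs H]] h1 h2 h3; split; first by rewrite /= Hp andbT; lia.
split; first by rewrite /= Hs addnC.
move=> m; rewrite ps0_cons !H; lia.
Qed.

Lemma good_base i c : 0 < i -> i + 1 <= c <= 2 * i + 1 ->
  good i (2 * i + c) (c :: (i + 1) :: nseq i.-1 1).
Proof.
move=> hi hc; split.
  rewrite /= all_nseq /= orbT andbT; lia.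
split.
  rewrite /= sumn_nseq mul1n; lia.
move=> m; rewrite !ps0_cons !ps0_ones; lia.
Qed.

Lemma exists_good i n : 0 < i -> 3 * i + 1 <= n -> n <> 4 * i + 2 ->
  ~ (n = 8 /\ i = 1) -> exists p, good i n p.
Proof.
move=> hi; elim/ltn_ind: n => n IH h1 h2 h3.
have [hb|hb] := leqP n (4 * i + 1).
  exists ((n - 2 * i) :: (i + 1) :: nseq i.-1 1).
  have E : 2 * i + (n - 2 * i) = n by lia.
  rewrite -{1}E; apply: good_base => //; lia.
have [e1|e1] := eqVneq n (5 * i + 3).
  have -> : n = (4 * i + 1) + (i + 2) by lia.
  have [p Hp] : exists p, good i (4 * i + 1) p.
    exists ((2 * i + 1) :: (i + 1) :: nseq i.-1 1).
    have -> : 4 * i + 1 = 2 * i + (2 * i + 1) by lia.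
    apply: good_base => //; lia.
  exists ((i + 2) :: p); apply: good_step => //; lia.
have [e2|e2] := eqVneq (n, i) (10, 1).
  case: e2 => E1 E2; subst n i.
  have [p Hp] := IH 7 ltac:(lia) ltac:(lia) ltac:(lia) ltac:(lia).
  exists (3 :: p); have -> : 10 = 7 + 3 by [].
  by apply: good_step.
have e2' : ~ (n = 10 /\ i = 1) by move=> [E1 E2]; subst; rewrite eqxx in e2.
have [p Hp] := IH (n - (i + 1)) ltac:(lia) ltac:(lia) ltac:(lia) ltac:(lia).
exists ((i + 1) :: p).
have -> : n = (n - (i + 1)) + (i + 1) by lia.
apply: good_step => //; lia.
Qed.

Lemma ps_iff p m : 1 <= m -> (partial_sum p m <-> ps0 p m).
Proof.
move=> hm; split.
  by move=> [s [H1 H2 H3]]; exists s.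
move=> [s [H1 H2]]; exists s; split => //.
by apply/eqP => E; move: H2 hm; rewrite E /= => <-.
Qed.

Theorem lemma2p1 (n i : nat) (hi : 0 < i) (hin : 3 * i < n) :
  exists p : seq nat, is_partition n p /\
    ((~ (n = 4 * i + 2 \/ (n = 8 /\ i = 1)) ->
       forall m, 1 <= m <= n -> (partial_sum p m <-> (m <> i /\ m <> n - i))) /\
     ((n = 4 * i + 2 \/ (n = 8 /\ i = 1)) ->
       forall m, 1 <= m <= n ->
         (partial_sum p m <-> (m <> i /\ m <> n - i /\ 2 * m <> n)))).
Proof.
have [e1|e1] := eqVneq n (4 * i + 2).
  exists ((i + 1) :: (i + 1) :: (i + 1) :: nseq i.-1 1).
  split.
    split; first by rewrite /= all_nseq /= orbT andbT addn1.
    rewrite /= sumn_nseq mul1n; lia.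
  split; first by move=> H; exfalso; apply: H; left.
  move=> _ m hm; rewrite ps_iff; last lia.
  rewrite !ps0_cons !ps0_ones; lia.
have [e2|e2] := eqVneq (n, i) (8, 1).
  case: e2 => E1 E2; subst n i.
  exists [:: 2; 3; 3].
  split; first by split.
  split; first by move=> H; exfalso; apply: H; right.
  move=> _ m hm; rewrite ps_iff; last lia.
  rewrite !ps0_cons !ps0_nil. clear e1 hin; lia.
have e2' : ~ (n = 8 /\ i = 1) by move=> [E1 E2]; subst; rewrite eqxx in e2.
have e1' : n <> 4 * i + 2 by move=> E; rewrite E eqxx in e1.
have [p [Hp [Hs H]]] := (@exists_good i n hi) ltac:(lia) e1' e2'.
exists p; split; first by split.
split.
  move=> _ m hm; rewrite ps_iff; last lia.
  rewrite H; lia.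
move=> [h|h]; exfalso; [exact: e1' h| exact: e2' h].
Qed.
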